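(* Let $\mathbb{H}=\{z\in\mathbb{C}:\operatorname{Im}z>0\}$. For $z_1,z_2\in\mathbb{H}$ and $p\ge1$ let \[ U_p(z_1,z_2)=\frac{|z_1-z_2|}{\sqrt[p]{\alpha^p+\beta^p}},\quad \alpha=\sqrt{\operatorname{Im}(z_1)^2+c^2},\quad \beta=\sqrt{\operatorname{Im}(z_2)^2+c^2},\quad c=\frac{|\operatorname{Re}(z_1-z_2)|}{2}. \] Then $b_{\mathbb{H},p}(z_1,z_2)\ge U_p(z_1,z_2)$.
   Context: For $z_1,z_2\in\mathbb{H}$ and $p\ge1$, $b_{\mathbb{H},p}(z_1,z_2)=\sup_{t\in\mathbb{R}}\frac{|z_1-z_2|}{\sqrt[p]{|z_1-t|^p+|t-z_2|^p}}$. *)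

(* Defs.v *)
From Stdlib Require Import Reals.
From Coquelicot Require Import Coquelicot.
Open Scope R_scope.

Definition inH (z : C) : Prop := 0 < Im z.

Definition proot (p x : R) : R := Rpower x (/ p).

(* The quantity |z1 - z2| / (|z1 - t|^p + |t - z2|^p)^(1/p) for real t.
   For z1, z2 in H both moduli are > 0, so Rpower is the genuine power. *)
Definition b_ratio (p : R) (z1 z2 : C) (t : R) : R :=
  Cmod (z1 - z2)
  / proot p (Rpower (Cmod (z1 - RtoC t)) p + Rpower (Cmod (RtoC t - z2)) p).

Definition b_H (p : R) (z1 z2 : C) : Rbar :=
  Lub_Rbar (fun x => exists t : R, x = b_ratio p z1 z2 t).

Definition U_p (p : R) (z1 z2 : C) : R :=
  let c := Rabs (Re (z1 - z2)) / 2 in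
  let alpha := sqrt (Im z1 ^ 2 + c ^ 2) in
  let beta := sqrt (Im z2 ^ 2 + c ^ 2) in
  Cmod (z1 - z2) / proot p (Rpower alpha p + Rpower beta p).

(* Main.v *)
Require Import Defs.
From Stdlib Require Import Reals Lra.
From Coquelicot Require Import Coquelicot.
Open Scope R_scope.

Theorem theorem3p23 (p : R) (z1 z2 : C) :
  1 <= p -> inH z1 -> inH z2 ->
  Rbar_le (Finite (U_p p z1 z2)) (b_H p z1 z2).
Proof.
  intros _ _ _.
  destruct z1 as [a1 b1], z2 as [a2 b2].
  set (t := (a1 + a2) / 2).
  assert (E : U_p p (a1, b1) (a2, b2) = b_ratio p (a1, b1) (a2, b2) t).
  { unfold U_p, b_ratio, Cmod. simpl.
    assert (H1 : (a1 - t) ^ 2 + (b1 - 0) ^ 2 = b1 ^ 2 + (Rabs (a1 - a2) / 2) ^ 2).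
    { unfold Rdiv. rewrite Rpow_mult_distr, pow2_abs.
      unfold t. field. }
    assert (H2 : (t - a2) ^ 2 + (0 - b2) ^ 2 = b2 ^ 2 + (Rabs (a1 - a2) / 2) ^ 2).
    { unfold Rdiv. rewrite Rpow_mult_distr, pow2_abs.
      unfold t. field. }
    f_equal. f_equal. f_equal; f_equal; f_equal; simpl in *; unfold Rminus in *; lra. }
  rewrite E.
  destruct (Lub_Rbar_correct (fun x => exists t : R, x = b_ratio p (a1, b1) (a2, b2) t)) as [Hub _].
  apply Hub. exists t. reflexivity.
Qed.
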